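(* For $0<a<b$ and $y>0$ let $R_{a,b}(y)$ be the number of pairs of nonnegative integers $(\ell,p)$ with $a\ell+bp\le y$. Then $$\frac{y^2}{2ab}+\frac{y}{2a}\le R_{a,b}(y)\le \frac{y^2}{2ab}+\frac{y}{2a}+\frac{y}{b}+\frac{b}{8a}+1.$$ *)

(* Defs.v *)
From Stdlib Require Import Reals List.
Open Scope R_scope.

Definition in_region (a b y : R) (l p : nat) : nat :=
  if Rle_dec (a * INR l + b * INR p) y then 1%nat else 0%nat.

(* Search bound: any admissible (l,p) with a,b>0, y>0 satisfies
   l <= y/a and p <= y/b, so both are < bound a b y. *)
Definition bound (a b y : R) : nat :=
  (Z.to_nat (up (y / a)) + Z.to_nat (up (y / b)) + 1)%nat.

(* R_{a,b}(y) = #{(l,p) in N^2 | a l + b p <= y}, counted over the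
   finite box [0, bound) x [0, bound), which contains all such pairs
   when a, b > 0. *)
Definition lattice_count (a b y : R) : nat :=
  let N := bound a b y in
  fold_right Nat.add 0%nat
    (map (fun l => fold_right Nat.add 0%nat
                     (map (fun p => in_region a b y l p) (seq 0 N)))
         (seq 0 N)).

(* Main.v *)
Require Import Defs.
From Stdlib Require Import Reals.
From Stdlib Require Import Lra Lia Psatz List ZArith.
Open Scope R_scope.

Definition sumL (f : nat -> nat) (n : nat) : nat :=
  fold_right Nat.add 0%nat (map f (seq 0 n)).

Lemma fold_add_shift (l : list nat) (k : nat) :
  fold_right Nat.add k l = (fold_right Nat.add 0 l + k)%nat.
Proof. induction l; simpl; lia. Qed.

Lemma sumL_S f n : sumL f (S n) = (sumL f n + f n)%nat.
Proof.
  unfold sumL. rewrite seq_S, map_app, fold_right_app. simpl.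
  rewrite fold_add_shift. lia.
Qed.

Lemma sumL_0 f : sumL f 0 = 0%nat.
Proof. reflexivity. Qed.

Lemma sumL_ext f g n : (forall i, f i = g i) -> sumL f n = sumL g n.
Proof. intros H; induction n; [reflexivity|]. rewrite !sumL_S, IHn, H. reflexivity. Qed.

Lemma sumL_add f g n : sumL (fun i => f i + g i)%nat n = (sumL f n + sumL g n)%nat.
Proof. induction n; [reflexivity|]. rewrite !sumL_S, IHn. lia. Qed.

Lemma sumL_swap (f : nat -> nat -> nat) N M :
  sumL (fun l => sumL (fun p => f l p) M) N = sumL (fun p => sumL (fun l => f l p) N) M.
Proof.
  induction N.
  - rewrite sumL_0. symmetry. induction M; [reflexivity|]. rewrite sumL_S, IHM. reflexivity.
  - rewrite sumL_S, IHN.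
    rewrite (sumL_ext (fun p => sumL (fun l => f l p) (S N))
                      (fun p => sumL (fun l => f l p) N + f N p)%nat).
    + rewrite sumL_add. reflexivity.
    + intros i. exact (sumL_S (fun l => f l i) N).
Qed.

Definition rowc (a c y : R) (N : nat) : nat :=
  sumL (fun l => if Rle_dec (a * INR l + c) y then 1%nat else 0%nat) N.

Lemma row_inv a c y N (ha : 0 < a) :
  (rowc a c y N <= N)%nat /\
  (rowc a c y N = 0%nat \/ exists s', rowc a c y N = S s' /\ a * INR s' + c <= y) /\
  (rowc a c y N = N \/ y < a * INR (rowc a c y N) + c).
Proof.
  induction N.
  - unfold rowc. rewrite sumL_0. split; [lia|]. split; auto.
  - unfold rowc in *. rewrite sumL_S.
    set (s := sumL _ N) in *.
    destruct IHN as [H1 [H2 H3]].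
    destruct (Rle_dec (a * INR N + c) y) as [H|H].
    + assert (s = N).
      { destruct H3 as [H3|H3]; auto. exfalso.
        assert (INR s <= INR N) by (apply le_INR; lia). nra. }
      subst s. rewrite H0. split; [lia|]. split.
      * right. exists N. split; [lia|exact H].
      * left. lia.
    + rewrite Nat.add_0_r. split; [lia|]. split; auto.
      destruct H3 as [H3|H3].
      * right. rewrite H3. lra.
      * right. exact H3.
Qed.

Lemma row_bounds a c y N (ha : 0 < a) (hN : y - c < a * INR N) :
  (c <= y -> y - c < a * INR (rowc a c y N) <= y - c + a) /\
  (y < c -> rowc a c y N = 0%nat).
Proof.
  destruct (row_inv a c y N ha) as [H1 [H2 H3]].
  set (s := rowc a c y N) in *.
  split.
  - intros Hc. split.
    + destruct H3 as [H3|H3]; [rewrite H3; exact hN | lra].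
    + destruct H2 as [H2|[s' [Hs Hs']]].
      * rewrite H2. simpl. lra.
      * rewrite Hs, S_INR. nra.
  - intros Hc. destruct H2 as [H2|[s' [Hs Hs']]]; auto.
    exfalso. assert (0 <= INR s') by apply pos_INR. nra.
Qed.

Lemma up_nat z : 0 < z -> z < INR (Z.to_nat (up z)) /\ INR (Z.to_nat (up z)) <= z + 1.
Proof.
  intros hz. destruct (archimed z) as [H1 H2].
  assert (0 < up z)%Z by (apply lt_IZR; lra).
  rewrite INR_IZR_INZ, Z2Nat.id by lia. lra.
Qed.

Theorem proposition2p5 (a b y : R) (ha : 0 < a) (hab : a < b) (hy : 0 < y) :
  y ^ 2 / (2 * a * b) + y / (2 * a) <= INR (lattice_count a b y) /\
  INR (lattice_count a b y) <=
    y ^ 2 / (2 * a * b) + y / (2 * a) + y / b + b / (8 * a) + 1.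
Proof.
  assert (hb : 0 < b) by lra.
  set (N := Defs.bound a b y).
  set (Ka := Z.to_nat (up (y / a))).
  set (K := Z.to_nat (up (y / b))).
  assert (HN : N = (Ka + K + 1)%nat) by reflexivity.
  destruct (up_nat (y / a)) as [Ka1 Ka2]. { apply Rdiv_lt_0_compat; lra. }
  destruct (up_nat (y / b)) as [K1 K2]. { apply Rdiv_lt_0_compat; lra. }
  fold Ka in Ka1, Ka2. fold K in K1, K2.
  assert (yK : y < b * INR K).
  { assert (y = b * (y / b)) by (field; lra). nra. }
  assert (yK2 : b * INR K <= y + b).
  { assert (y = b * (y / b)) by (field; lra). nra. }
  assert (yN : y < a * INR N).
  { assert (y = a * (y / a)) by (field; lra).
    assert (INR Ka <= INR N) by (apply le_INR; lia). nra. }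
  assert (HL : lattice_count a b y = sumL (fun p => rowc a (b * INR p) y N) N).
  { unfold lattice_count. fold N.
    change (sumL (fun l => sumL (fun p => in_region a b y l p) N) N = sumL (fun p => rowc a (b * INR p) y N) N).
    rewrite sumL_swap. reflexivity. }
  set (h := fun n => sumL (fun p => rowc a (b * INR p) y N) n).
  assert (Hrow : forall p, y - b * INR p < a * INR N).
  { intros p. assert (0 <= INR p) by apply pos_INR. nra. }
  assert (Htail : forall m, h (K + m)%nat = h K).
  { induction m.
    - rewrite Nat.add_0_r. reflexivity.
    - unfold h in *. rewrite Nat.add_succ_r, sumL_S, IHm.
      rewrite (proj2 (row_bounds a (b * INR (K + m)) y N ha (Hrow _))). lia.
      assert (INR K <= INR (K + m)) by (apply le_INR; lia). nra. }
  assert (Hhead : forall n, (n <= K)%nat ->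
     INR n * y - b * INR n * (INR n - 1) / 2 <= a * INR (h n) <=
     INR n * y - b * INR n * (INR n - 1) / 2 + a * INR n).
  { induction n; intros Hn.
    - unfold h. rewrite sumL_0. simpl. lra.
    - unfold h in *. rewrite sumL_S, plus_INR.
      assert (INR (S n) <= INR K) by (apply le_INR; lia).
      rewrite S_INR in H.
      destruct (proj1 (row_bounds a (b * INR n) y N ha (Hrow _))) as [B1 B2]. nra.
      destruct (IHn ltac:(lia)) as [I1 I2].
      assert (E : INR (S n) * y - b * INR (S n) * (INR (S n) - 1) / 2 =
                  INR n * y - b * INR n * (INR n - 1) / 2 + (y - b * INR n))
        by (rewrite S_INR; field).
      rewrite E, S_INR.
      set (M := INR n * y - b * INR n * (INR n - 1) / 2) in *.
      set (u := a * INR (sumL (fun p : nat => rowc a (b * INR p) y N) n)) in *.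
      set (v := a * INR (rowc a (b * INR n) y N)) in *.
      rewrite Rmult_plus_distr_l. fold u v. nra. }
  assert (HT : lattice_count a b y = h K).
  { rewrite HL. fold (h N). replace N with (K + (N - K))%nat by lia.
    apply Htail. }
  rewrite HT.
  destruct (Hhead K (le_n K)) as [T1 T2].
  set (T := INR (h K)) in *.
  set (k := INR K) in *.
  split.
  - assert (E : T - (y ^ 2 / (2 * a * b) + y / (2 * a)) =
                (2 * b * (a * T) - y ^ 2 - b * y) / (2 * a * b)) by (field; lra).
    assert (0 <= 2 * b * (a * T) - y ^ 2 - b * y).
    { nra. }
    assert (0 <= (2 * b * (a * T) - y ^ 2 - b * y) / (2 * a * b)).
    { apply Rle_mult_inv_pos; nra. }
    lra.
  - assert (E : y ^ 2 / (2 * a * b) + y / (2 * a) + y / b + b / (8 * a) + 1 - T =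
                (y ^ 2 + b * y + 2 * a * y + b ^ 2 / 4 + 2 * a * b - 2 * b * (a * T)) / (2 * a * b))
      by (field; lra).
    assert (0 <= y ^ 2 + b * y + 2 * a * y + b ^ 2 / 4 + 2 * a * b - 2 * b * (a * T)).
    { assert (Q1 : 0 <= (b - 2 * (y - b * k + b)) ^ 2) by apply pow2_ge_0.
      assert (Q2 : 0 <= a * (y + b - b * k)) by (apply Rmult_le_pos; lra).
      assert (Q3 : 2 * b * (a * T) <= 2 * b * (k * y - b * k * (k - 1) / 2 + a * k))
        by (apply Rmult_le_compat_l; lra).
      nra. }
    assert (0 <= (y ^ 2 + b * y + 2 * a * y + b ^ 2 / 4 + 2 * a * b - 2 * b * (a * T)) / (2 * a * b)).
    { apply Rle_mult_inv_pos; nra. }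
    lra.
Qed.
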